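(* Let $s\geq 1$, let $q$ be a prime power and let $C^{(1)},\ldots,C^{(s)}\in\mathbb{F}_q^{\mathbb{N}\times\mathbb{N}_0}$ be finite-row generating matrices. Let $(s_n)_{n\geq 0}$ be a sequence of $q$-adic integers that is uniformly distributed in $\mathbb{Z}_q$. Suppose that the matrices $C^{(1)},\ldots,C^{(s)}$ generate a uniformly distributed sequence in $[0,1]^s$ via Algorithm 1 (for some admissible choice of the bijections). Then, for every choice of bijections $\psi_r$ ($r\geq 0$) and $\lambda_{i,j}$, Algorithm 2 applied with these matrices and the input sequence $(s_n)_{n\geq 0}$ produces a uniformly distributed sequence in $[0,1]^s$.
   Context: $\mathbb{F}_q$ is the finite field with $q$ elements, $D_q=\{0,1,\ldots,q-1\}$. $\mathbb{Z}_q$ is the ring of $q$-adic integers; every $z\in\mathbb{Z}_q$ has a unique representation $z=\sum_{r\geq 0}a_rq^r$ with $a_r\in D_q$ (for nonnegative integers this is the base-$q$ expansion), and $\tau_k(z)=\sum_{r=0}^{k-1}a_rq^r$. A sequence $(x_n)_{n\ge0}$ in $\mathbb{Z}_q$ is uniformly distributed in $\mathbb{Z}_q$ if for every $k\geq 1$ and every $0\leq a<q^k$, $\lim_{N\to\infty}\frac1N\#\{0\le n<N:\tau_k(x_n)\equiv a \pmod{q^k}\}=q^{-k}$. A generating matrix $C^{(i)}=(c^{(i)}_{j,r})_{j\geq1,r\geq0}$ over $\mathbb{F}_q$ is finite-row if each row has only finitely many nonzero entries. Algorithm 2: choose bijections $\psi_r:D_q\to\mathbb{F}_q$ ($r\ge0$),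 finite-row matrices $C^{(1)},\dots,C^{(s)}$, bijections $\lambda_{i,j}:\mathbb{F}_q\to D_q$ ($1\le i\le s$, $j\ge1$), and a sequence $(s_n)_{n\ge0}$ in $\mathbb{Z}_q$. Writing $s_n=\sum_{r\ge0}a_rq^r$, set $x_n^{(i)}=\sum_{j\ge1}\lambda_{i,j}\big(\sum_{r\ge0}c^{(i)}_{j,r}\psi_r(a_r)\big)q^{-j}$ and $\boldsymbol{x}_n=(x_n^{(1)},\ldots,x_n^{(s)})\in[0,1]^s$. Algorithm 1 is the same construction with $s_n=n$ for all $n$ and with the bijections $\psi_r$ required to satisfy $\psi_r(0)=0$ for all sufficiently large $r$. The star discrepancy of points $\boldsymbol{x}_0,\dots,\boldsymbol{x}_{N-1}\in[0,1]^s$ is $\sup_J|A(J)/N-\mathrm{vol}(J)|$, the supremum over subintervals $J\subseteq[0,1]^s$ with one vertex at the origin, $A(J)$ the number of $n<N$ with $\boldsymbol{x}_n\in J$; a sequence is uniformly distributed if the star discrepancy of its first $N$ terms tends to $0$ as $N\to\infty$. *)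

(* Defs.v *)
From HB Require Import structures.
From mathcomp Require Import all_boot all_order all_algebra.
From mathcomp Require Import all_classical all_reals all_analysis.
Set Implicit Arguments. Unset Strict Implicit. Unset Printing Implicit Defensive.
Import Order.TTheory GRing.Theory Num.Theory.
Import numFieldNormedType.Exports.
Local Open Scope classical_set_scope.
Local Open Scope ring_scope.

(* The finite field F_q is an arbitrary finite field F; q := #|F|. *)
Lemma card_finField_gt0 (F : finFieldType) : (0 < #|F|)%N.
Proof. by apply/card_gt0P; exists 0. Qed.

Definition digit (F : finFieldType) := 'I_#|F|.

(* A q-adic integer, given by its (unique) digit sequence z = sum_r a_r q^r. *)
Definition Zq (F : finFieldType) := nat -> digit F.

Definition tau (F : finFieldType) (k : nat) (z : Zq F) : nat :=
  (\sum_(r < k) z r * #|F| ^ r)%N.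

Definition nat_to_Zq (F : finFieldType) (n : nat) : Zq F :=
  fun r => Ordinal (ltn_pmod (n %/ #|F| ^ r) (card_finField_gt0 F)).

Definition ud_Zq (R : realType) (F : finFieldType) (x : nat -> Zq F) : Prop :=
  forall (k a : nat), (0 < k)%N -> (a < #|F| ^ k)%N ->
    (count (fun n => tau k (x n) == a %[mod #|F| ^ k]) (iota 0 N))%:R
      / (N%:R : R) @[N --> \oo] --> (((#|F| ^ k)%:R : R)^-1).

Definition finite_row (F : finFieldType) (row : nat -> F) : Prop :=
  exists R0 : nat, forall r, (R0 <= r)%N -> row r = 0.

(* sum_{r>=0} row_r * v_r for a finite row: a finite sum up to a bound
   beyond which the row vanishes (chosen classically; any such bound
   gives the same value). *)
Definition row_sum (F : finFieldType) (row : nat -> F) (v : nat -> F) : F :=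
  let R0 := xget 0%N [set R0 : nat | forall r, (R0 <= r)%N -> row r = 0] in
  \sum_(r < R0) row r * v r.

(* Algorithm 2.  C i j r = c^{(i)}_{j,r} (rows j >= 1, columns r >= 0),
   psi r : D_q -> F_q, lam i j : F_q -> D_q (j >= 1), input sequence sq. *)
Definition alg2 (R : realType) (F : finFieldType) (s : nat)
  (C : 'I_s -> nat -> nat -> F) (psi : nat -> digit F -> F)
  (lam : 'I_s -> nat -> F -> digit F) (sq : nat -> Zq F) :
  nat -> 'I_s -> R :=
  fun n i =>
    limn (fun m => \sum_(1 <= j < m)
      ((lam i j (row_sum (C i j) (fun r => psi r (sq n r))) : nat)%:R
        * ((#|F|%:R : R) ^- j))).

Definition alg1 (R : realType) (F : finFieldType) (s : nat)
  (C : 'I_s -> nat -> nat -> F) (psi : nat -> digit F -> F)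
  (lam : 'I_s -> nat -> F -> digit F) : nat -> 'I_s -> R :=
  alg2 R C psi lam (@nat_to_Zq F).

Definition star_discrepancy (R : realType) (s : nat) (x : nat -> 'I_s -> R)
  (N : nat) : R :=
  sup [set d : R | exists t : 'I_s -> R,
        (forall i, 0 <= t i <= 1) /\
        d = `| (count (fun n => `[< forall i, 0 <= x n i < t i >]) (iota 0 N))%:R
                 / (N%:R : R) - \prod_(i < s) t i |].

Definition ud_seq (R : realType) (s : nat) (x : nat -> 'I_s -> R) : Prop :=
  star_discrepancy x @ \oo --> (0 : R).

Definition admissible2 (F : finFieldType) (s : nat)
  (psi : nat -> digit F -> F) (lam : 'I_s -> nat -> F -> digit F) : Prop :=
  (forall r, bijective (psi r)) /\
  (forall i j, (1 <= j)%N -> bijective (lam i j)).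

Definition admissible1 (F : finFieldType) (s : nat)
  (psi : nat -> digit F -> F) (lam : 'I_s -> nat -> F -> digit F) : Prop :=
  admissible2 psi lam /\
  exists R0 : nat, forall r, (R0 <= r)%N ->
    forall a : digit F, nat_of_ord a = 0%N -> psi r a = 0.

(* Main.v *)
Set Warnings "-notation-overridden,-ambiguous-paths,-notation-incompatible-prefix,-deprecated".
Require Import Defs.
From HB Require Import structures.
From mathcomp Require Import all_boot all_order all_algebra.
From mathcomp Require Import all_classical all_reals all_analysis.
Import Order.TTheory GRing.Theory Num.Theory.
Import numFieldNormedType.Exports.
Local Open Scope classical_set_scope.
Local Open Scope ring_scope.
From mathcomp Require Import zify ring lra.

Lemma q_gt1 (F : finFieldType) : (1 < #|F|)%N.
Proof. exact: card_finNzRing_gt1. Qed.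

Lemma base_lt (q K : nat) (f : 'I_K -> nat) : (forall k, f k < q)%N ->
  (\sum_(k < K) f k * q ^ k < q ^ K)%N.
Proof.
elim: K f => [|K IH] f hf; first by rewrite big_ord0 expn0.
rewrite big_ord_recr /= expnSr.
have := @IH (fun k => f (widen_ord (leqnSn K) k)) (fun k => hf _).
have := hf ord_max. set S := (\sum_(_ < _) _)%N. set X := (q ^ K)%N. simpl. nia.
Qed.

Lemma base_inj (q K : nat) (f g : 'I_K -> nat) : (forall k, f k < q)%N ->
  (forall k, g k < q)%N ->
  (\sum_(k < K) f k * q ^ k = \sum_(k < K) g k * q ^ k)%N -> forall k, f k = g k.
Proof.
elim: K f g => [|K IH] f g hf hg; first by move=> _ [].
rewrite !big_ord_recr /=.
have hSf := @base_lt q K (fun k => f (widen_ord (leqnSn K) k)) (fun k => hf _).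
have hSg := @base_lt q K (fun k => g (widen_ord (leqnSn K) k)) (fun k => hg _).
move: hSf hSg.
set Sf := (\sum_(_ < _) _)%N. set Sg := (\sum_(_ < _) _)%N. set X := (q ^ K)%N.
move=> hSf hSg E.
have eK : f ord_max = g ord_max by nia.
have eS : Sf = Sg by nia.
move=> k. case: (unliftP ord_max k) => [j ->|->] //.
have := IH (fun k => f (widen_ord (leqnSn K) k)) (fun k => g (widen_ord (leqnSn K) k)) (fun k => hf _) (fun k => hg _) eS j.
by move=> H; have -> : lift ord_max j = widen_ord (leqnSn K) j by apply: val_inj; rewrite /= /bump leqNgt ltn_ord.
Qed.

Definition ser (R : realType) (q : nat) (d : nat -> nat) (M : nat) : R :=
  \sum_(1 <= j < M) (d j)%:R * ((q%:R : R) ^- j).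

Lemma ser_S (R : realType) q d M : (ser R q d M.+1) = ser R q d M + (d M)%:R * ((q%:R : R) ^- M) *+ (0 < M)%N.
Proof.
rewrite /ser; case: M => [|M]; first by rewrite !big_geq // mulr0n addr0.
by rewrite big_nat_recr //= mulr1n.
Qed.

Lemma ser_nd (R : realType) q d : nondecreasing_seq (ser R q d).
Proof.
apply/nondecreasing_seqP => n; rewrite ser_S lerDl.
by case: (0 < n)%N; rewrite ?mulr0n ?mulr1n //.
Qed.

Lemma ser_step (R : realType) (q : nat) (x : nat) n : (1 < q)%N -> (x < q)%N ->
  (x%:R * ((q%:R : R) ^- n.+1) + (q%:R : R) ^- n.+1 <= (q%:R : R) ^- n).
Proof.
move=> hq hx.
have qp : (0 : R) < q%:R by rewrite ltr0n; lia.
rewrite exprSr invfM.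
have hx1 : (x%:R + 1 <= (q%:R : R)) by rewrite natr1 ler_nat.
have ha : (0 : R) <= (q%:R : R) ^- n by rewrite invr_ge0 exprn_ge0 // ltW.
have hb : (q%:R : R) * (q%:R)^-1 = 1 by rewrite mulfV // gt_eqF.
have hb0 : (0 : R) <= (q%:R)^-1 by rewrite invr_ge0 ltW.
have hx0 : (0 : R) <= x%:R by [].
set a := (q%:R : R) ^- n in ha *. set b := (q%:R : R)^-1 in hb hb0 *.
rewrite -[X in _ + X]mul1r -mulrDl.
apply: (le_trans (ler_wpM2r (mulr_ge0 ha hb0) hx1)).
by rewrite mulrCA hb mulr1.
Qed.

Lemma ser_ub (R : realType) q d : (1 < q)%N -> (forall j, d j < q)%N ->
  forall m M, ser R q d M <= ser R q d m.+1 + (q%:R : R) ^- m.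
Proof.
move=> hq hd m M.
have qp : (0 : R) < q%:R by rewrite ltr0n; lia.
have ip : forall n, (0 : R) <= (q%:R : R) ^- n by move=> n; rewrite invr_ge0 exprn_ge0 // ltW.
case: (leqP M m.+1) => hM.
  by apply: ler_wpDr; [exact: ip | exact: ser_nd].
have H : forall p, ser R q d (m.+1 + p) + (q%:R : R) ^- (m + p) <= ser R q d m.+1 + (q%:R : R) ^- m.
  elim=> [|p IH]; first by rewrite !addn0.
  rewrite addnS ser_S /= mulr1n -addrA (le_trans _ IH) // lerD2l.
  rewrite addnS -addSn. exact: ser_step.
have := H (M - m.+1)%N. rewrite subnKC; last by lia.
apply: le_trans; rewrite lerDl; exact: ip.
Qed.

Lemma ser_cvg (R : realType) q d : (1 < q)%N -> (forall j, d j < q)%N ->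
  cvgn (ser R q d).
Proof.
move=> hq hd; apply: cvgP; apply: nondecreasing_cvgn; first exact: ser_nd.
exists (ser R q d 1 + (q%:R : R) ^- 0) => _ [M _ <-]; exact: ser_ub.
Qed.

Lemma ser_lim (R : realType) q d : (1 < q)%N -> (forall j, d j < q)%N -> forall m,
  ser R q d m.+1 <= limn (ser R q d) <= ser R q d m.+1 + (q%:R : R) ^- m.
Proof.
move=> hq hd m; apply/andP; split.
  exact: (nondecreasing_cvgn_le (ser_nd R q d) (@ser_cvg R q d hq hd)).


apply: limr_le; first exact: (@ser_cvg R q d hq hd).
by apply: nearW => M; apply: ser_ub.
Qed.

Lemma ser_idx (R : realType) q d m : (0 < q)%N ->
  ((\sum_(k < m) d (m - k) * q ^ k)%N)%:R = ser R q d m.+1 * (q%:R : R) ^+ m.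
Proof.
move=> hq.
have qp : (q%:R : R) != 0 by rewrite pnatr_eq0 -lt0n.
elim: m => [|m IH]; first by rewrite big_ord0 /ser big_geq // mul0r.
rewrite big_ord_recl /= subn0 ser_S /= mulr1n natrD.
have -> : (\sum_(i < m) d (m.+1 - bump 0 i) * q ^ bump 0 i)%N = (q * \sum_(k < m) d (m - k) * q ^ k)%N.
  rewrite big_distrr /=; apply: eq_bigr => i _.
  by rewrite /bump /= add1n subSS expnS mulnCA.
rewrite expn0 muln1 natrM IH mulrDl -mulrA mulVf ?expf_neq0 // mulr1 exprS; ring.
Qed.

Lemma count_split T (P P1 P2 : pred T) (s : seq T) :
  (forall n, (P n : nat) = P1 n + P2 n)%N -> count P s = (count P1 s + count P2 s)%N.
Proof. move=> H; elim: s => [|a s IH] //=; rewrite IH H; lia. Qed.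

Lemma count_partition (T : finType) U (p : U -> T) (G : pred T) (s : seq U) :
  count (fun n => G (p n)) s = (\sum_(w | G w) count (fun n => p n == w) s)%N.
Proof.
elim: s => [|a s IH] /=; first by rewrite big1.
rewrite IH big_split /=; congr (_ + _)%N.
rewrite big_mkcond (bigD1 (p a)) //= eqxx big1 ?addn0; first by case: (G (p a)).
by move=> w ne; rewrite eq_sym (negbTE ne); case: (G w).
Qed.

Definition cntR (R : realType) (Q : nat) (y : R) : R :=
  \sum_(k < Q) (nat_of_bool (k%:R < y))%:R.
Arguments cntR {R}.

Lemma cntR_S (R : realType) Q (y : R) :
  cntR Q.+1 y = cntR Q y + (nat_of_bool (Q%:R < y))%:R.
Proof. by rewrite /cntR big_ord_recr. Qed.

Lemma cntR_ge0 (R : realType) Q (y : R) : 0 <= cntR Q y.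
Proof. by apply: sumr_ge0 => k _. Qed.

Lemma cntR_leQ (R : realType) Q (y : R) : cntR Q y <= Q%:R.
Proof.
elim: Q => [|Q IH]; first by rewrite /cntR big_ord0.
rewrite cntR_S -natr1; apply: lerD => //.
by case: (_ < _); rewrite ?ler01 ?lexx.
Qed.

Lemma cntR_lb (R : realType) Q (y : R) : y <= cntR Q y \/ Q%:R <= cntR Q y.
Proof.
elim: Q => [|Q IH]; first by right; rewrite /cntR big_ord0.
rewrite cntR_S.
case: (ltP (Q%:R) y) => hQ /=.
  case: IH => IH.
    have := cntR_leQ R Q y. move=> h. exfalso. have : y < y by apply: (le_lt_trans IH (le_lt_trans h hQ)). by rewrite ltxx.
  by right; rewrite -natr1 lerD2r.
case: IH => IH; left; rewrite addr0 //. exact: le_trans IH.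
Qed.

Lemma cntR_ub (R : realType) Q (y : R) : -1 <= y -> cntR Q y <= y + 1.
Proof.
move=> hy; elim: Q => [|Q IH]; first by rewrite /cntR big_ord0 -lerBlDr sub0r.
rewrite cntR_S.
case: (ltP (Q%:R) y) => hQ /=; last by rewrite addr0.
have := cntR_leQ R Q y. move=> h. rewrite lerD2r. apply: le_trans h (ltW hQ).
Qed.

Lemma prod_diff (R : realType) I (r : seq I) (u t : I -> R) :
  (forall i, 0 <= u i <= 1) -> (forall i, 0 <= t i <= 1) ->
  `|\prod_(i <- r) u i - \prod_(i <- r) t i| <= \sum_(i <- r) `|u i - t i|.
Proof.
move=> hu ht; elim: r => [|a r IH]; first by rewrite !big_nil subrr normr0.
rewrite !big_cons.
have U01 : 0 <= \prod_(i <- r) u i <= 1.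
  apply/andP; split; [apply: prodr_ge0 => i _; by case/andP: (hu i) | apply: prodr_ile1 => i _; exact: hu].
set U := \prod_(i <- r) u i in U01 IH *. set T := \prod_(i <- r) t i in IH *.
have -> : u a * U - t a * T = (u a - t a) * U + t a * (U - T) by ring.
apply: (le_trans (ler_normD _ _)); apply: lerD.
  rewrite normrM; case/andP: U01 => U0 U1.
  rewrite (ger0_norm U0); apply: le_trans (ler_wpM2l _ U1) _; rewrite ?mulr1 //.
rewrite normrM; case/andP: (ht a) => t0 t1; rewrite (ger0_norm t0).
apply: le_trans (ler_wpM2r _ t1) _; rewrite ?mul1r //.
Qed.

Definition cntbox (R : realType) (s : nat) (x : nat -> 'I_s -> R) (a b : 'I_s -> R) (N : nat) : nat :=
  count (fun n => [forall i, (a i <= x n i) && (x n i < b i)]) (iota 0 N).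

Lemma freq01 (R : realType) (c N : nat) : (c <= N)%N -> (0 : R) <= (c%:R : R) / (N%:R : R) <= 1.
Proof.
move=> h; apply/andP; split; first by apply: divr_ge0.
case: N h => [|N] h; first by rewrite invr0 mulr0.
by rewrite ler_pdivrMr ?ltr0n // mul1r ler_nat.
Qed.

Lemma count_iota_le (P : pred nat) N : (count P (iota 0 N) <= N)%N.
Proof. by rewrite -[X in (_ <= X)%N](size_iota 0 N) count_size. Qed.

Lemma disc_ub (R : realType) s (x : nat -> 'I_s -> R) (t : 'I_s -> R) N :
  (forall i, 0 <= t i <= 1) ->
  `|(cntbox R s x (fun=> 0) t N)%:R / N%:R - \prod_(i < s) t i| <= star_discrepancy x N.
Proof.
move=> ht.
set E := [set d : R | exists t : 'I_s -> R,
        (forall i, 0 <= t i <= 1) /\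
        d = `| (count (fun n => `[< forall i, 0 <= x n i < t i >]) (iota 0 N))%:R
                 / (N%:R : R) - \prod_(i < s) t i |].
have memE : forall t, (forall i, 0 <= t i <= 1) ->
   E `|(cntbox R s x (fun=> 0) t N)%:R / N%:R - \prod_(i < s) t i|.
  move=> t0 ht0; exists t0; split => //. rewrite /cntbox. congr (`|(_ : nat)%:R / _ - _|).
  apply: eq_count => n; apply/idP/idP => [/forallP H | /asboolP H]; [apply/asboolP | apply/forallP] => i; exact: H.
have hs : has_sup E.
  split; first by exists (`|(cntbox R s x (fun=> 0) t N)%:R / N%:R - \prod_(i < s) t i|); exact: memE.
  exists 2 => _ [t' [ht' ->]].
  apply: le_trans (ler_normB _ _) _.
  have := @freq01 R (count (fun n => `[< forall i, 0 <= x n i < t' i >]) (iota 0 N)) N (count_iota_le _ _).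
  case/andP => f0 f1.
  have p01 : 0 <= \prod_(i < s) t' i <= 1.
    apply/andP; split; [apply: prodr_ge0 => i _; by case/andP: (ht' i) | apply: prodr_ile1 => i _; exact: ht'].
  case/andP: p01 => p0 p1.
  rewrite (ger0_norm f0) (ger0_norm p0) -[2]/(1 + 1). exact: lerD.
exact: sup_upper_bound hs _ (memE t ht).
Qed.

Lemma forall_split (T : finType) (P : pred T) (i0 : T) :
  [forall i, P i] = P i0 && [forall i, (i != i0) ==> P i].
Proof.
apply/forallP/andP => [H|[H0 /forallP H] i]; first by split => //; apply/forallP => i; rewrite H implybT.
by case: (eqVneq i i0) => [->|ne] //; have := H i; rewrite ne.
Qed.

Definition ak (R : realType) s (a : 'I_s -> R) (k : nat) : 'I_s -> R :=
  fun i => if (i < k)%N then a i else 0.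
Arguments ak {R s}.

Lemma box_ie (R : realType) s (x : nat -> 'I_s -> R) (a : 'I_s -> R) N :
  (forall n i, 0 <= x n i) -> (forall i, 0 <= a i <= 1) ->
  forall k, (k <= s)%N -> forall b : 'I_s -> R, (forall i, 0 <= b i <= 1) ->
  (forall i, ak a k i <= b i) ->
  `|(cntbox R s x (ak a k) b N)%:R / N%:R - \prod_(i < s) (b i - ak a k i)|
     <= 2 ^+ k * star_discrepancy x N.
Proof.
move=> hx ha; elim=> [|k IH] hk b hb hab.
  have -> : ak a 0 = fun=> 0 by [].
  rewrite expr0 mul1r; under eq_bigr do rewrite subr0; exact: disc_ub.
set ik : 'I_s := Ordinal hk.
set b' := fun i => if i == ik then a ik else b i.
have akk : forall i, i != ik -> ak a k.+1 i = ak a k i.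
  move=> i ne; rewrite /ak ltnS leq_eqVlt.
  by have -> : (nat_of_ord i == k) = false by apply/negbTE; apply: contra ne => /eqP e; apply/eqP/val_inj.
have ak_ik : ak a k ik = 0 by rewrite /ak /= ltnn.
have ak1_ik : ak a k.+1 ik = a ik by rewrite /ak /= ltnSn.
have hb' : forall i, 0 <= b' i <= 1 by move=> i; rewrite /b'; case: (_ == _).
have hab' : forall i, ak a k i <= b' i.
  move=> i; rewrite /b'; case: (eqVneq i ik) => [->|ne]; first by rewrite ak_ik; case/andP: (ha ik).
  by rewrite -akk.
have habk : forall i, ak a k i <= b i.
  move=> i; case: (eqVneq i ik) => [->|ne]; first by rewrite ak_ik; case/andP: (hb ik).
  by rewrite -akk.
have abik : a ik <= b ik by have := hab ik; rewrite ak1_ik.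
have IH1 := IH (ltnW hk) b hb habk.
have IH2 := IH (ltnW hk) b' hb' hab'.
have Ec : cntbox R s x (ak a k) b N = (cntbox R s x (ak a k.+1) b N + cntbox R s x (ak a k) b' N)%N.
  apply: count_split => n.
  rewrite (forall_split _ (fun i => (ak a k i <= x n i) && (x n i < b i)) ik).
  rewrite (forall_split _ (fun i => (ak a k.+1 i <= x n i) && (x n i < b i)) ik).
  rewrite (forall_split _ (fun i => (ak a k i <= x n i) && (x n i < b' i)) ik).
  have -> : [forall i, (i != ik) ==> (ak a k.+1 i <= x n i) && (x n i < b i)] =
            [forall i, (i != ik) ==> (ak a k i <= x n i) && (x n i < b i)].
    by apply: eq_forallb => i; case: (eqVneq i ik) => [->|ne] //=; rewrite akk.
  have -> : [forall i, (i != ik) ==> (ak a k i <= x n i) && (x n i < b' i)] =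
            [forall i, (i != ik) ==> (ak a k i <= x n i) && (x n i < b i)].
    by apply: eq_forallb => i; case: (eqVneq i ik) => [->|ne] //=; rewrite /b' (negbTE ne).
  rewrite ak_ik ak1_ik /b' eqxx (hx n ik).
  case: [forall i, _]; rewrite ?andbF ?andbT //.
  case: (leP (a ik) (x n ik)) => h /=; [by rewrite addn0 | by rewrite (lt_le_trans h abik)].
have Ev : \prod_(i < s) (b i - ak a k i) = \prod_(i < s) (b i - ak a k.+1 i) + \prod_(i < s) (b' i - ak a k i).
  rewrite [LHS](bigD1 ik) // [X in _ = X + _](bigD1 ik) // [X in _ = _ + X](bigD1 ik) //= ak_ik ak1_ik /b' eqxx.
  have -> : \prod_(i < s | i != ik) (b i - ak a k.+1 i) = \prod_(i < s | i != ik) (b i - ak a k i).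
    by apply: eq_bigr => i ne; rewrite akk.
  have -> : \prod_(i < s | i != ik) ((if i == ik then a ik else b i) - ak a k i) = \prod_(i < s | i != ik) (b i - ak a k i).
    by apply: eq_bigr => i ne; rewrite (negbTE ne).
  ring.
move: IH1 IH2; rewrite Ec Ev natrD mulrDl => IH1 IH2.
set c1 := (cntbox R s x (ak a k.+1) b N)%:R / (N%:R : R) in IH1 *.
set c2 := (cntbox R s x (ak a k) b' N)%:R / (N%:R : R) in IH2 *.
set V1 := \prod_(i < s) (b i - ak a k.+1 i) in IH1 *.
set V2 := \prod_(i < s) (b' i - ak a k i) in IH2 *.
have -> : c1 - V1 = (c1 + c2 - (V1 + V2)) - (c2 - V2) by ring.
apply: le_trans (ler_normB _ _) _.
rewrite exprS -mulrA mulr2n mulrDl mul1r. exact: lerD.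
Qed.

Lemma box_final (R : realType) s (x : nat -> 'I_s -> R) (a b : 'I_s -> R) N :
  (forall n i, 0 <= x n i) -> (forall i, 0 <= a i <= 1) -> (forall i, 0 <= b i <= 1) ->
  (forall i, a i <= b i) ->
  `|(cntbox R s x a b N)%:R / N%:R - \prod_(i < s) (b i - a i)|
     <= 2 ^+ s * star_discrepancy x N.
Proof.
move=> hx ha hb hab.
have E : ak a s = a by apply: funext => i; rewrite /ak ltn_ord.
have := @box_ie R s x a N hx ha s (leqnn s) b hb; rewrite E; apply; exact: hab.
Qed.

Definition Idx (F : finFieldType) s m (lam : 'I_s -> nat -> F -> digit F) (i : 'I_s)
  (f : {ffun 'I_m -> F}) : nat := (\sum_(k < m) lam i (m - k)%N (f k) * #|F| ^ k)%N.
Arguments Idx {F s m}.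

Lemma Idx_lt (F : finFieldType) s m (lam : 'I_s -> nat -> F -> digit F) (i : 'I_s) (f : {ffun 'I_m -> F}) : (@Idx F s m lam i f < #|F| ^ m)%N.
Proof. by apply: base_lt => k; exact: ltn_ord. Qed.

Lemma Idx_inj (F : finFieldType) s m (lam : 'I_s -> nat -> F -> digit F) (i : 'I_s) : (forall j, (1 <= j)%N -> injective (lam i j)) ->
  injective (@Idx F s m lam i).
Proof.
move=> hl f g E; apply/ffunP => k.
have := @base_inj #|F| m (fun k => lam i (m - k)%N (f k) : nat) (fun k => lam i (m - k)%N (g k) : nat)
   (fun k => ltn_ord _) (fun k => ltn_ord _) E k.
move/val_inj; apply: hl; have := ltn_ord k; lia.
Qed.

Definition Idxo (F : finFieldType) s m (lam : 'I_s -> nat -> F -> digit F) (i : 'I_s) (f : {ffun 'I_m -> F}) : 'I_(#|F| ^ m) := Ordinal (@Idx_lt F s m lam i f).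

Lemma Idxo_bij (F : finFieldType) s m (lam : 'I_s -> nat -> F -> digit F) (i : 'I_s) : (forall j, (1 <= j)%N -> injective (lam i j)) ->
  bijective (@Idxo F s m lam i).
Proof.
move=> hl; apply: inj_card_bij.
  by move=> f g /(congr1 val) /= E; apply: (@Idx_inj F s m lam i hl).
by rewrite card_ffun !card_ord.
Qed.

Definition Phi (F : finFieldType) s m K (C : 'I_s -> nat -> nat -> F) (v : {ffun 'I_K -> F}) :
  {ffun 'I_s -> {ffun 'I_m -> F}} :=
  [ffun i => [ffun k : 'I_m => \sum_(r < K) C i (m - k)%N r * v r]].

Lemma fiber_le (F : finFieldType) s m K (C : 'I_s -> nat -> nat -> F) : (forall w, exists v, @Phi F s m K C v = w) ->
  forall w w', (#|[set v | @Phi F s m K C v == w]%SET| <= #|[set v | @Phi F s m K C v == w']%SET|)%N.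
Proof.
move=> hs w w'.
have [v0 e0] := hs w. have [v1 e1] := hs w'.
pose f (v : {ffun 'I_K -> F}) := [ffun r => v r - v0 r + v1 r].
have finj : injective f.
  move=> u u' /ffunP E; apply/ffunP => r; have := E r; rewrite !ffunE.
  by move/addIr/addIr.
rewrite -(card_imset _ finj); apply: subset_leq_card. apply/fintype.subsetP => y /imsetP [v].
rewrite !inE => /eqP ev ->; apply/eqP.
rewrite -e1; apply/ffunP => i; apply/ffunP => k; rewrite !ffunE.
have E1 : forall u : {ffun 'I_K -> F}, \sum_(r < K) C i (m - k)%N r * u r = @Phi F s m K C u i k by move=> u; rewrite !ffunE.
rewrite (eq_bigr (fun r : 'I_K => (C i (m - k)%N r * v r - C i (m - k)%N r * v0 r) + C i (m - k)%N r * v1 r)); last first.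
  by move=> r _; rewrite ffunE mulrDr mulrBr.
rewrite big_split sumrB /= !E1 ev e0; by rewrite subrr add0r.
Qed.

Lemma fiber_mul (V W : finType) (Phi : V -> W) :
  (forall w w', #|[set v | Phi v == w]%SET| <= #|[set v | Phi v == w']%SET|)%N ->
  forall w0, (#|[set v | Phi v == w0]%SET| * #|W|)%N = #|V|.
Proof.
move=> hle w0.
have E : forall w, #|[set v | Phi v == w]%SET| = #|[set v | Phi v == w0]%SET|.
  by move=> w; apply/eqP; rewrite eqn_leq !hle.
have S : #|V| = (\sum_(w : W) #|[set v | Phi v == w]%SET|)%N.
  rewrite -sum1_card (partition_big Phi xpredT) //=; apply: eq_bigr => w _.
  rewrite -sum1_card; apply: eq_bigl => v; by rewrite inE.
rewrite S (eq_bigr (fun _ => #|[set v | Phi v == w0]%SET|)); last by move=> w _; exact: E.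
rewrite sum_nat_const mulnC; congr (_ * _)%N; exact: eq_card.
Qed.

Lemma sum_constR (R : realType) (I : finType) (P : pred I) (x : R) :
  \sum_(i | P i) x = ((\sum_(i | P i) 1)%N)%:R * x.
Proof. by rewrite natr_sum mulr_suml; apply: eq_bigr => i _; rewrite mul1r. Qed.

Lemma freq_lemma (R : realType) (V W : finType) (Phi : V -> W) (p : nat -> V) (c : nat) :
  (0 < #|V|)%N ->
  (forall w, #|[set v | Phi v == w]%SET| = c) -> (c * #|W| = #|V|)%N ->
  (forall v, (count (fun n => p n == v) (iota 0 N))%:R / (N%:R : R) @[N --> \oo] --> (#|V|%:R : R)^-1) ->
  forall eta : R, 0 < eta -> \forall N \near \oo, forall G : pred W,
    `| (count (fun n => G (Phi (p n))) (iota 0 N))%:R / (N%:R : R) - #|[set w | G w]%SET|%:R / (#|W|%:R : R)| <= eta.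
Proof.
move=> V0 hc hcW hv eta eta0.
have c0 : (0 < c)%N by move: V0; rewrite -hcW muln_gt0 => /andP[].
have W0 : (0 < #|W|)%N by move: V0; rewrite -hcW muln_gt0 => /andP[].
set e' := eta / #|V|%:R.
have e'0 : 0 < e' by rewrite divr_gt0 // ltr0n.
have : \forall N \near \oo, forall v, `|(#|V|%:R : R)^-1 - (count (fun n => p n == v) (iota 0 N))%:R / (N%:R : R)| <= e'.
  apply: filter_forall => v; move/cvgrPdist_le: (hv v); apply; exact: e'0.
apply: filterS => N HN G.
have -> := count_partition V nat p (fun v => G (Phi v)) (iota 0 N).
rewrite natr_sum mulr_suml.
have nG : (\sum_(v | G (Phi v)) 1 = #|[set w | G w]%SET| * c)%N.
  rewrite (partition_big Phi G) //.
  rewrite (eq_bigr (fun _ => c)); last first.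
    move=> w Gw; rewrite -(hc w) -sum1_card; apply: eq_bigl => v; rewrite inE.
    by case: (eqVneq (Phi v) w) => [->|]; rewrite ?Gw ?andbF ?andbT.
  rewrite -[X in (X * c)%N]sum1_card big_distrl /=.
  by apply: eq_big => [w|w _]; rewrite ?inE ?mul1n.
have -> : #|[set w | G w]%SET|%:R / (#|W|%:R : R) = \sum_(v | G (Phi v)) (#|V|%:R : R)^-1.
  rewrite sum_constR nG -hcW !natrM; field.
  by rewrite !pnatr_eq0 -!lt0n c0 W0.
rewrite -sumrB; apply: le_trans (ler_norm_sum _ _ _) _.
apply: le_trans.
  apply: (@ler_sum _ _ _ (fun v => G (Phi v)) _ (fun _ => e')).
  by move=> v _; rewrite distrC; exact: HN.
rewrite sum_constR /e' mulrA ler_pdivrMr ?ltr0n // mulrC ler_pM2l // ler_nat.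
by rewrite sum1_card max_card.
Qed.

Lemma forall_prod (I : finType) (Q : pred I) :
  nat_of_bool [forall i, Q i] = (\prod_i nat_of_bool (Q i))%N.
Proof.
case: (boolP [forall i, Q i]) => [/forallP H|].
  by rewrite big1 // => i _; rewrite H.
rewrite negb_forall => /existsP [i ni].
by rewrite (bigD1 i) //= (negbTE ni) mul0n.
Qed.

Lemma card_forall (I J : finType) (Q : I -> pred J) :
  #|[set w : {ffun I -> J} | [forall i, Q i (w i)]]%SET| = (\prod_i #|[set f | Q i f]%SET|)%N.
Proof.
rewrite -sum1_card big_mkcond /=.
rewrite (eq_bigr (fun w : {ffun I -> J} => \prod_i nat_of_bool (Q i (w i)))%N); last first.
  by move=> w _; rewrite inE -forall_prod; case: [forall i, _].
rewrite -(bigA_distr_bigA (fun i j => nat_of_bool (Q i j))).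
apply: eq_bigr => i _; rewrite -sum1_card [RHS]big_mkcond /=; apply: eq_bigr => j _.
by rewrite inE; case: (Q i j).
Qed.

Lemma card_Idx (F : finFieldType) s m (lam : 'I_s -> nat -> F -> digit F) (i : 'I_s) (P : pred nat) :
  (forall j, (1 <= j)%N -> injective (lam i j)) ->
  #|[set f : {ffun 'I_m -> F} | P (Idx lam i f)]%SET| = (\sum_(k < #|F| ^ m) nat_of_bool (P k))%N.
Proof.
move=> hl.
rewrite (reindex (@Idxo F s m lam i)) /=; last exact: (onW_bij _ (@Idxo_bij F s m lam i hl)).
rewrite -sum1_card big_mkcond /=; apply: eq_bigr => f _.
by rewrite inE; case: (P _).
Qed.

Lemma card_prodset (R : realType) (F : finFieldType) s m (lam : 'I_s -> nat -> F -> digit F)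
  (P : 'I_s -> pred nat) :
  (forall i j, (1 <= j)%N -> injective (lam i j)) ->
  #|[set w : {ffun 'I_s -> {ffun 'I_m -> F}} | [forall i, P i (Idx lam i (w i))]]%SET|%:R
    / (#|{ffun 'I_s -> {ffun 'I_m -> F}}|%:R : R)
  = \prod_(i < s) (((\sum_(k < #|F| ^ m) nat_of_bool (P i k))%N)%:R / ((#|F| ^ m)%N%:R : R)).
Proof.
move=> hl.
rewrite (card_forall _ _ (fun i (f : {ffun 'I_m -> F}) => P i (Idx lam i f))).
rewrite (eq_bigr (fun i => \sum_(k < #|F| ^ m) nat_of_bool (P i k)))%N; last first.
  by move=> i _; exact: (@card_Idx F s m lam i (P i) (hl i)).
rewrite natr_prod big_split /= prodr_const card_ord card_ffun card_ffun !card_ord.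
by rewrite natrX exprVn.
Qed.

Definition restrict (F : finFieldType) K (z : Zq F) : {ffun 'I_K -> digit F} := [ffun r : 'I_K => z r].
Arguments restrict {F}.
Definition psiv (F : finFieldType) K (psi : nat -> digit F -> F) (b : {ffun 'I_K -> digit F}) : {ffun 'I_K -> F} :=
  [ffun r : 'I_K => psi r (b r)].
Arguments psiv {F K}.

Lemma sum_trunc (F : finFieldType) (f : nat -> F) K n : (K <= n)%N -> (forall r, (K <= r)%N -> f r = 0) ->
  \sum_(r < n) f r = \sum_(r < K) f r.
Proof.
move=> hKn hf; transitivity (\sum_(0 <= r < n) f r); first by rewrite big_mkord.
rewrite (big_cat_nat (leq0n K) hKn) /=.
have -> : \sum_(K <= r < n) f r = 0.
  by rewrite big_nat_cond big1 // => r /andP [/andP [h _] _]; exact: hf.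
by rewrite addr0 big_mkord.
Qed.

Lemma row_sumE (F : finFieldType) (row : nat -> F) (v : nat -> F) K :
  (forall r, (K <= r)%N -> row r = 0) -> row_sum row v = \sum_(r < K) row r * v r.
Proof.
move=> hK; rewrite /row_sum.
have HR0 : forall r, (xget 0%N [set R0 : nat | forall r, (R0 <= r)%N -> row r = 0%R] <= r)%N -> row r = 0 :> F.
  by case: xgetP => [y -> Hy|H]; [exact: Hy | exfalso; apply: (H K)].
set R0 := xget _ _ in HR0 *.
transitivity (\sum_(r < maxn K R0) row r * v r).
  by symmetry; apply: (@sum_trunc F (fun r => row r * v r) R0 (maxn K R0)); rewrite ?leq_maxr // => r h; rewrite HR0 ?mul0r.
by apply: (@sum_trunc F (fun r => row r * v r) K (maxn K R0)); rewrite ?leq_maxl // => r h; rewrite hK ?mul0r.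
Qed.

Lemma alg2_bounds (R : realType) (F : finFieldType) s (C : 'I_s -> nat -> nat -> F)
  (psi : nat -> digit F -> F) (lam : 'I_s -> nat -> F -> digit F) (sq : nat -> Zq F) n i m K :
  (forall i (k : 'I_m) r, (K <= r)%N -> C i (m - k)%N r = 0) ->
  ((Idx lam i (@Phi F s m K C (psiv psi (restrict K (sq n))) i))%:R / ((#|F| ^ m)%N%:R) <= alg2 R C psi lam sq n i
    <= (Idx lam i (@Phi F s m K C (psiv psi (restrict K (sq n))) i)).+1%:R / ((#|F| ^ m)%N%:R)).
Proof.
move=> hK.
set I := Idx lam i _.
set d := fun j => nat_of_ord (lam i j (row_sum (C i j) (fun r => psi r (sq n r)))).
have -> : alg2 R C psi lam sq n i = limn (ser R #|F| d) by [].
have hq := q_gt1 F.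
have qp : (0 : R) < (#|F|%:R) ^+ m by rewrite exprn_gt0 // ltr0n; lia.
have EI : I = (\sum_(k < m) d (m - k)%N * #|F| ^ k)%N.
  rewrite /I /Idx; apply: eq_bigr => k _; rewrite /d !ffunE; congr (nat_of_ord (lam _ _ _) * _)%N.
  rewrite (row_sumE _ _ _ _ (hK i k)); apply: eq_bigr => r _; by rewrite !ffunE.
have := @ser_lim R #|F| d hq (fun j => ltn_ord _) m.
rewrite -natr1 EI ser_idx; last by lia.
by rewrite natrX mulrDl mul1r !mulfK ?gt_eqF.
Qed.

Lemma exK (F : finFieldType) s (C : 'I_s -> nat -> nat -> F)
  (hC : forall i j, (1 <= j)%N -> finite_row (C i j)) m :
  exists K, (0 < K)%N /\ forall i (k : 'I_m) r, (K <= r)%N -> C i (m - k)%N r = 0.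
Proof.
have H : forall p : 'I_s * 'I_m, exists R0, forall r, (R0 <= r)%N -> C p.1 (m - p.2)%N r = 0.
  move=> [i k] /=; apply: (hC i (m - k)%N); have := ltn_ord k; lia.
case: (boolp.choice H) => f hf.
exists (\max_p f p).+1; split => // i k r hr.
apply: (hf (i, k)); apply: leq_trans hr; apply: leqW; exact: (leq_bigmax (i, k)).
Qed.

Lemma psiv_bij (F : finFieldType) K (psi : nat -> digit F -> F) :
  (forall r, bijective (psi r)) -> bijective (@psiv F K psi).
Proof.
move=> hb; apply: inj_card_bij.
  move=> b b' /ffunP E; apply/ffunP => r; have := E r; rewrite !ffunE.
  exact: (bij_inj (hb r)).
by rewrite !card_ffun !card_ord.
Qed.

Lemma tau_restrict (F : finFieldType) K (z : Zq F) (b : {ffun 'I_K -> digit F}) :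
  (tau K z == (\sum_(r < K) (b r : nat) * #|F| ^ r)%N %[mod #|F| ^ K]) = (restrict K z == b).
Proof.
have h1 := @base_lt #|F| K (fun r => z r : nat) (fun k => ltn_ord _).
have h2 := @base_lt #|F| K (fun r => b r : nat) (fun k => ltn_ord _).
rewrite /tau !modn_small //.
apply/eqP/eqP => [E|<-].
  apply/ffunP => r; rewrite ffunE; apply: val_inj.
  exact: (@base_inj #|F| K (fun r => z r : nat) (fun r => b r : nat) (fun k => ltn_ord _) (fun k => ltn_ord _) E r).
by apply: eq_bigr => r _; rewrite ffunE.
Qed.

Lemma u_bounds (R : realType) (Q : nat) (t y : R) : (0 < Q)%N -> 0 <= t <= 1 ->
  t * Q%:R - 1 <= y <= t * Q%:R ->
  0 <= cntR Q y / Q%:R <= 1 /\ `|cntR Q y / Q%:R - t| <= Q%:R^-1.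
Proof.
move=> hQ /andP[t0 t1] /andP[y1 y2].
have Qp : (0 : R) < Q%:R by rewrite ltr0n.
have c0 := cntR_ge0 R Q y. have cQ := cntR_leQ R Q y.
have cub : cntR Q y <= y + 1.
  apply: cntR_ub; apply: le_trans y1; rewrite lerBrDr addNr; exact: mulr_ge0.
have clb := cntR_lb R Q y.
split.
  apply/andP; split; first exact: divr_ge0.
  by rewrite ler_pdivrMr // mul1r.
have tQ : t * Q%:R <= Q%:R by rewrite ler_piMl // ltW.
have hn : `|cntR Q y - t * Q%:R| <= 1.
  set T := t * Q%:R in y1 y2 tQ *. set c := cntR Q y in c0 cQ cub clb *.
  rewrite ler_norml; apply/andP; split; last by lra.
  case: clb => h; lra.
have E : cntR Q y / Q%:R - t = (cntR Q y - t * Q%:R) / Q%:R by field; rewrite gt_eqF.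
rewrite E normrM normfV (gtr0_norm Qp) -[X in _ <= X]mul1r.
by apply: ler_wpM2r => //; rewrite invr_ge0 ltW.
Qed.

Lemma freq_v (R : realType) (F : finFieldType) K (psi : nat -> digit F -> F)
  (hpsi : forall r, bijective (psi r)) (sq : nat -> Zq F) (hsq : ud_Zq R sq) (K0 : (0 < K)%N) :
  forall v : {ffun 'I_K -> F},
  (count (fun n => psiv psi (restrict K (sq n)) == v) (iota 0 N))%:R / (N%:R : R) @[N --> \oo]
     --> (#|{ffun 'I_K -> F}|%:R : R)^-1.
Proof.
move=> v; case: (@psiv_bij F K psi hpsi) => g gK Kg.
set b := g v. have hb : psiv psi b = v by rewrite /b Kg.
set a := (\sum_(r < K) (b r : nat) * #|F| ^ r)%N.
have E : forall n, (psiv psi (restrict K (sq n)) == v) = (tau K (sq n) == a %[mod #|F| ^ K]).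
  by move=> n; rewrite tau_restrict -hb (inj_eq (can_inj gK)).
rewrite card_ffun card_ord.
have := hsq K a K0 (@base_lt #|F| K (fun r => b r : nat) (fun k => ltn_ord _)).
have Efun : (fun N => (count (fun n => psiv psi (restrict K (sq n)) == v) (iota 0 N))%:R / (N%:R : R)) =
   (fun N => (count (fun n => tau K (sq n) == a %[mod #|F| ^ K]) (iota 0 N))%:R / (N%:R : R)).
  by apply: funext => N; rewrite (eq_count E).
by rewrite Efun natrX.
Qed.

Lemma nat_lt_of (R : realType) (I d : nat) : (I%:R : R) < d%:R + 2/3 -> (I < d.+1)%N.
Proof. move=> h; rewrite -(ltr_nat R) -natr1; lra. Qed.

Lemma nat_lt_of2 (R : realType) (I d : nat) : (d%:R : R) + 3^-1 <= I.+1%:R -> (d < I.+1)%N.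
Proof. by move=> h; rewrite -(ltr_nat R); apply: lt_le_trans h; rewrite ltrDl invr_gt0. Qed.

Lemma frac_le1 (R : realType) (d Q : nat) (c : R) : (0 < Q)%N -> c <= 1 -> (d.+1 <= Q)%N ->
  (d%:R + c) / Q%:R <= 1.
Proof.
move=> hQ hc hd; rewrite ler_pdivrMr ?ltr0n // mul1r.
move: hd; rewrite -(ler_nat R) -natr1 => hd; lra.
Qed.

Lemma surj_alg1 (R : realType) (F : finFieldType) s (C : 'I_s -> nat -> nat -> F)
  (psi1 : nat -> digit F -> F) (lam1 : 'I_s -> nat -> F -> digit F)
  (hl : forall i j, (1 <= j)%N -> injective (lam1 i j))
  (ud : ud_seq (alg1 R C psi1 lam1)) m K
  (hK : forall i (k : 'I_m) r, (K <= r)%N -> C i (m - k)%N r = 0) :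
  forall w, exists v, @Phi F s m K C v = w.
Proof.
move=> w0; case: (pselect (exists v, @Phi F s m K C v = w0)) => // nE; exfalso.
set Q := (#|F| ^ m)%N.
have Q0 : (0 < Q)%N by rewrite expn_gt0; have := q_gt1 F; lia.
have Qp : (0 : R) < Q%:R by rewrite ltr0n.
have Qi : (0 : R) < Q%:R^-1 by rewrite invr_gt0.
set ds := fun i => Idx lam1 i (w0 i).
have dsQ : forall i, (ds i < Q)%N by move=> i; exact: Idx_lt.
set a := fun i => ((ds i)%:R + 3^-1) / (Q%:R : R).
set b := fun i => ((ds i)%:R + 2 / 3) / (Q%:R : R).
set pat := fun n => @Phi F s m K C (psiv psi1 (restrict K (nat_to_Zq F n))).
have bnd : forall n i, (Idx lam1 i (pat n i))%:R / Q%:R <= alg1 R C psi1 lam1 n i <= (Idx lam1 i (pat n i)).+1%:R / Q%:R.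
  move=> n i; exact: (@alg2_bounds R F s C psi1 lam1 (nat_to_Zq F) n i m K hK).
move: ud bnd; rewrite /ud_seq; set x := alg1 R C psi1 lam1 => ud bnd.
have x0 : forall n i, 0 <= x n i.
  move=> n i; case/andP: (bnd n i) => h _; apply: le_trans h; exact: divr_ge0.
have cnt0 : forall N, cntbox R s x a b N = 0%N.
  move=> N; rewrite /cntbox; apply/eqP; rewrite -leqn0 leqNgt -has_count; apply/hasPn => n _.
  apply/negP => /forallP H.
  apply: nE; exists (psiv psi1 (restrict K (nat_to_Zq F n))).
  apply/ffunP => i; move: (H i) => /andP [ha hb]; case/andP: (bnd n i) => l u.
  apply: (@Idx_inj F s m lam1 i (hl i)).
  change (Idx lam1 i (pat n i) = ds i); move: l u; set I := Idx lam1 i (pat n i) => l u.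
  have h1 : (I < (ds i).+1)%N.
    have := le_lt_trans l hb; rewrite /b ltr_pM2r //; exact: nat_lt_of.
  have h2 : (ds i < I.+1)%N.
    have := le_trans ha u; rewrite /a ler_pM2r //; exact: nat_lt_of2.
  move: h1 h2; clear; lia.
have ha01 : forall i, 0 <= a i <= 1.
  move=> i; apply/andP; split; first by apply: divr_ge0 => //; apply: addr_ge0.
  apply: frac_le1 => //; try exact: dsQ; clear; lra.
have hb01 : forall i, 0 <= b i <= 1.
  move=> i; apply/andP; split; first by apply: divr_ge0 => //; apply: addr_ge0.
  apply: frac_le1 => //; try exact: dsQ; clear; lra.
have hab : forall i, a i <= b i.
  move=> i; rewrite /a /b ler_pM2r // lerD2l; clear; lra.
set V := ((3 * (Q%:R : R))^-1) ^+ s.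
have V0 : 0 < V by rewrite exprn_gt0 // invr_gt0 mulr_gt0.
have EV : \prod_(i < s) (b i - a i) = V.
  rewrite (eq_bigr (fun _ => (3 * (Q%:R : R))^-1)); first by rewrite prodr_const card_ord.
  move=> i _; rewrite /a /b -mulrBl invfM; field; rewrite gt_eqF //.
set P := (2 : R) ^+ s.
have P0 : 0 < P by rewrite exprn_gt0.
have e0 : 0 < V / (2 * P) by rewrite divr_gt0 // mulr_gt0.
move/cvgrPdist_le: ud => /(_ _ e0) [N0 _ HN].
have := HN N0 (leqnn N0); rewrite /= sub0r normrN => hD.
have hD' : star_discrepancy x N0 <= V / (2 * P) by apply: le_trans (ler_norm _) hD.
have := @box_final R s x a b N0 x0 ha01 hb01 hab.
rewrite cnt0 mul0r sub0r normrN EV (gtr0_norm V0) -/P => hB.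
have : P * star_discrepancy x N0 <= P * (V / (2 * P)) by rewrite ler_pM2l.
have -> : P * (V / (2 * P)) = V / 2 by field; rewrite gt_eqF.
move: hB V0; clear; set D := star_discrepancy _ _; lra.
Qed.

Lemma choose_m (R : realType) (q s : nat) (eps : R) : (1 < q)%N -> 0 < eps ->
  exists m, s%:R / ((q ^ m)%N%:R) <= eps / 2.
Proof.
move=> hq he.
set m := (Num.truncn (2 * s%:R / eps)).+1.
exists m.
have h1 : 2 * s%:R / eps < m%:R by exact: Num.Theory.truncnS_gt.
have h2 : (m < q ^ m)%N by exact: ltn_expl.
have Qp : (0 : R) < (q ^ m)%N%:R by rewrite ltr0n expn_gt0; lia.
have h3 : 2 * s%:R / eps < (q ^ m)%N%:R by apply: lt_trans h1 _; rewrite ltr_nat.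
rewrite ler_pdivrMr // ; move: h3; rewrite ltr_pdivrMr // => h3.
set Q := (q ^ m)%N%:R in Qp h3 *.
have h : 2 * s%:R <= Q * eps by apply: ltW.
have -> : eps / 2 * Q = (Q * eps) / 2 by ring.
move: h; clear; set P := Q * eps; move=> h; lra.
Qed.

Lemma sandwich (R : realType) (a l u pl pu T S e : R) : l <= a -> a <= u ->
  `|l - pl| <= e / 2 -> `|u - pu| <= e / 2 -> `|pl - T| <= S -> `|pu - T| <= S -> S <= e / 2 ->
  `|a - T| <= e.
Proof.
move=> h1 h2 /ler_normlP [h3 h3'] /ler_normlP [h4 h4'] /ler_normlP [h5 h5'] /ler_normlP [h6 h6'] h7.
apply/ler_normlP; split; lra.
Qed.

Lemma div_lt_nat (R : realType) (I Q : nat) (t : R) : (0 < Q)%N -> I%:R / Q%:R < t -> I%:R < t * Q%:R.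
Proof. by move=> hQ; rewrite ltr_pdivrMr // ltr0n. Qed.

Lemma nat_div_lt (R : realType) (I Q : nat) (t : R) : (0 < Q)%N -> I%:R < t * Q%:R - 1 -> I.+1%:R / Q%:R < t.
Proof. move=> hQ h; rewrite ltr_pdivrMr ?ltr0n // -natr1; lra. Qed.

Theorem theorem1 (R : realType) (F : finFieldType) (s : nat) (hs : (1 <= s)%N)
  (C : 'I_s -> nat -> nat -> F)
  (hC : forall i j, (1 <= j)%N -> finite_row (C i j))
  (sq : nat -> Zq F) (hsq : ud_Zq R sq)
  (h1 : exists psi1 lam1, admissible1 psi1 lam1 /\ ud_seq (alg1 R C psi1 lam1)) :
  forall (psi : nat -> digit F -> F) (lam : 'I_s -> nat -> F -> digit F),
    admissible2 psi lam -> ud_seq (alg2 R C psi lam sq).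
Proof.
move=> psi lam [hpsi hlam].
case: h1 => psi1 [lam1 [[[hpsi1 hlam1] _] ud1]].
have hl1 : forall i j, (1 <= j)%N -> injective (lam1 i j) by move=> i j hj; exact: bij_inj (hlam1 i j hj).
have hl : forall i j, (1 <= j)%N -> injective (lam i j) by move=> i j hj; exact: bij_inj (hlam i j hj).
rewrite /ud_seq; apply/cvgrPdist_le => eps eps0.
have [m hm] := @choose_m R #|F| s eps (q_gt1 F) eps0.
have [K [K0 hK]] := @exK F s C hC m.
have surj := @surj_alg1 R F s C psi1 lam1 hl1 ud1 m K hK.
set Ph := @Phi F s m K C.
set w00 := Ph [ffun => 0].
set c := #|[set v | Ph v == w00]%SET|.
have hc : forall w, #|[set v | Ph v == w]%SET| = c.
  by move=> w; apply/eqP; rewrite eqn_leq !(@fiber_le F s m K C surj).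
have hcW : (c * #|{ffun 'I_s -> {ffun 'I_m -> F}}|)%N = #|{ffun 'I_K -> F}|.
  exact: (fiber_mul _ _ Ph (@fiber_le F s m K C surj) w00).
have qp0 : (0 < #|F|)%N by apply: ltn_trans (q_gt1 F).
have V0 : (0 < #|{ffun 'I_K -> F}|)%N by rewrite card_ffun card_ord expn_gt0 qp0.
have hv := @freq_v R F K psi hpsi sq hsq K0.
have e20 : 0 < eps / 2 by rewrite divr_gt0.
have near := @freq_lemma R _ _ Ph (fun n => psiv psi (restrict K (sq n))) c V0 hc hcW hv _ e20.
apply: filterS near => N HN.
set Q := (#|F| ^ m)%N.
have Q0 : (0 < Q)%N by rewrite expn_gt0 qp0.
have Qp : (0 : R) < Q%:R by rewrite ltr0n.
set x := alg2 R C psi lam sq.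
have bnd : forall n i, (Idx lam i (Ph (psiv psi (restrict K (sq n))) i))%:R / Q%:R <= x n i
   <= (Idx lam i (Ph (psiv psi (restrict K (sq n))) i)).+1%:R / Q%:R.
  move=> n i; exact: (@alg2_bounds R F s C psi lam sq n i m K hK).
have elem : forall t : 'I_s -> R, (forall i, 0 <= t i <= 1) ->
  `| (count (fun n => `[< forall i, 0 <= x n i < t i >]) (iota 0 N))%:R / (N%:R : R) - \prod_(i < s) t i | <= eps.
  move=> t ht.
  pose GU := fun w : {ffun 'I_s -> {ffun 'I_m -> F}} => [forall i, (Idx lam i (w i))%:R < t i * Q%:R].
  pose GL := fun w : {ffun 'I_s -> {ffun 'I_m -> F}} => [forall i, (Idx lam i (w i))%:R < t i * Q%:R - 1].
  have HU := HN GU. have HL := HN GL.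
  have EU : #|[set w | GU w]%SET|%:R / (#|{ffun 'I_s -> {ffun 'I_m -> F}}|%:R : R)
      = \prod_(i < s) (cntR Q (t i * Q%:R) / Q%:R).
    etransitivity; first exact: (@card_prodset R F s m lam (fun i k => k%:R < t i * Q%:R) hl).
    by apply: eq_bigr => i _; rewrite /cntR natr_sum.
  have EL : #|[set w | GL w]%SET|%:R / (#|{ffun 'I_s -> {ffun 'I_m -> F}}|%:R : R)
      = \prod_(i < s) (cntR Q (t i * Q%:R - 1) / Q%:R).
    etransitivity; first exact: (@card_prodset R F s m lam (fun i k => k%:R < t i * Q%:R - 1) hl).
    by apply: eq_bigr => i _; rewrite /cntR natr_sum.
  rewrite EU in HU. rewrite EL in HL.
  have uU : forall i, 0 <= cntR Q (t i * Q%:R) / Q%:R <= 1 /\ `|cntR Q (t i * Q%:R) / Q%:R - t i| <= Q%:R^-1.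
    move=> i; apply: u_bounds => //; apply/andP; split; last exact: lexx.
    by rewrite lerBlDr lerDl ler01.
  have uL : forall i, 0 <= cntR Q (t i * Q%:R - 1) / Q%:R <= 1 /\ `|cntR Q (t i * Q%:R - 1) / Q%:R - t i| <= Q%:R^-1.
    move=> i; apply: u_bounds => //; apply/andP; split; first exact: lexx.
    by rewrite lerBlDr lerDl ler01.
  have sumQ : \sum_(i < s) (Q%:R : R)^-1 = s%:R / Q%:R.
    by rewrite sumr_const card_ord [RHS]mulr_natl.
  have pU : `|\prod_(i < s) (cntR Q (t i * Q%:R) / Q%:R) - \prod_(i < s) t i| <= s%:R / Q%:R.
    apply: le_trans (prod_diff _ _ _ _ _ (fun i => (uU i).1) ht) _.
    rewrite -sumQ; apply: ler_sum => i _; exact: (uU i).2.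
  have pL : `|\prod_(i < s) (cntR Q (t i * Q%:R - 1) / Q%:R) - \prod_(i < s) t i| <= s%:R / Q%:R.
    apply: le_trans (prod_diff _ _ _ _ _ (fun i => (uL i).1) ht) _.
    rewrite -sumQ; apply: ler_sum => i _; exact: (uL i).2.
  set cA := count (fun n => `[< forall i, 0 <= x n i < t i >]) (iota 0 N).
  have LA : (count (fun n => GL (Ph (psiv psi (restrict K (sq n))))) (iota 0 N) <= cA)%N.
    apply: sub_count => n /= /forallP HG; apply/asboolP => i.
    case/andP: (bnd n i) => l u; have h := HG i.
    apply/andP; split; first exact: le_trans (divr_ge0 _ _) l.
    apply: le_lt_trans u _; exact: nat_div_lt.
  have AU : (cA <= count (fun n => GU (Ph (psiv psi (restrict K (sq n))))) (iota 0 N))%N.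
    apply: sub_count => n /= /asboolP H; apply/forallP => i.
    case/andP: (bnd n i) => l u; case/andP: (H i) => _ h.
    apply: div_lt_nat => //; exact: le_lt_trans l h.
  have Ni : (0 : R) <= (N%:R)^-1 by rewrite invr_ge0.
  apply: (sandwich _ _ _ _ _ _ _ _ _ (ler_wpM2r Ni _) (ler_wpM2r Ni _) HL HU pL pU hm); by rewrite ler_nat.
rewrite sub0r normrN /star_discrepancy.
set E := [set d : R | _].
have En : E !=set0.
  exists (`| (count (fun n => `[< forall i, 0 <= x n i < (fun=> 0 : R) i >]) (iota 0 N))%:R / (N%:R : R) - \prod_(i < s) (fun=> 0 : R) i |).
  by exists (fun=> 0); split => // i; rewrite lexx ler01.
have Eub : ubound E eps by move=> _ [t [ht ->]]; exact: elem t ht.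
have Dle := ge_sup En Eub.
have D0 : 0 <= sup E.
  have := sup_upper_bound (conj En (ex_intro _ eps Eub)).
  case: En => e He /(_ e He); apply: le_trans.
  by case: He => t [_ ->].
by rewrite ger0_norm.
Qed.
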